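(* Let $b\ge0$, $M>0$ and $0\le\alpha<1$. Let $p(z)=1+c_1z+c_2z^2+\cdots$ be analytic in $\mathbb{D}$ with $|c_1|=2b$ and $|c_n|\le2M$ for all $n\ge2$. Put \[r_0=r_0(\alpha)=\frac{2(1-\alpha)}{1-\alpha+2b+\sqrt{(1-\alpha+2b)^2+8(1-\alpha)(M-b)}}.\] Then $|p(z)-1|\le1-\alpha$ for $|z|\le r_0$, and $\operatorname{Re}p(z)>\alpha$ for $|z|<r_0$. These results are sharp: the function $p_0(z)=1-2bz-2M\frac{z^2}{1-z}$ satisfies the hypotheses and $p_0(r_0)=\alpha$, so that $|p_0(r_0)-1|=1-\alpha$.
   Context: $\mathbb{D}=\{z\in\mathbb{C}:|z|<1\}$. *)

(* Defs.v *)
From HB Require Import structures.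
From mathcomp Require Import all_boot all_order all_algebra.
From mathcomp Require Import complex.
From mathcomp Require Import all_classical all_reals all_analysis.
Set Implicit Arguments. Unset Strict Implicit. Unset Printing Implicit Defensive.
Import Order.TTheory GRing.Theory Num.Theory.
Local Open Scope ring_scope.
Local Open Scope complex_scope.
Local Open Scope classical_set_scope.

HB.instance Definition _ (R : rcfType) := PseudoPointedMetric.copy R[i] R[i]^o.
HB.instance Definition _ (R : rcfType) := NormedModule.copy R[i] R[i]^o.

(* p is analytic in the unit disk D with Taylor coefficients c:
   for every z in D, the power series sum_k c_k z^k converges to p z. *)
Definition taylor_in_disk (R : realType) (c : nat -> R[i]) (p : R[i] -> R[i]) :=
  forall z : R[i], `|z| < 1 ->
    (fun n => \sum_(0 <= k < n) c k * z ^+ k) @ \oo --> p z.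

Definition r0 (R : realType) (b M alpha : R) : R :=
  2 * (1 - alpha) /
  (1 - alpha + 2 * b
   + Num.sqrt ((1 - alpha + 2 * b) ^+ 2 + 8 * (1 - alpha) * (M - b))).

Definition p0 (R : realType) (b M : R) (z : R[i]) : R[i] :=
  1 - (2 * b)%:C * z - (2 * M)%:C * (z ^+ 2 / (1 - z)).

Definition c0 (R : realType) (b M : R) (n : nat) : R[i] :=
  if n == 0%N then 1 else if n == 1%N then - (2 * b)%:C else - (2 * M)%:C.

(* Main.v *)
Require Import Defs.
From HB Require Import structures.
From mathcomp Require Import all_boot all_order all_algebra.
From mathcomp Require Import complex.
From mathcomp Require Import all_classical all_reals all_analysis.
From mathcomp Require Import ring lra.
Import Order.TTheory GRing.Theory Num.Theory.
Local Open Scope ring_scope.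
Local Open Scope complex_scope.
Local Open Scope classical_set_scope.
Set Implicit Arguments. Unset Strict Implicit.

Definition gg {R : realType} (b M t : R) := 2 * b * t + 2 * M * (t ^+ 2 / (1 - t)).

Lemma r0_facts (R : realType) (b M alpha : R) : 0 <= b -> 0 < M -> 0 <= alpha -> alpha < 1 -> 0 < r0 b M alpha /\ r0 b M alpha < 1 /\ gg b M (r0 b M alpha) = 1 - alpha.
Proof.
move=> hb hM ha0 ha1.
rewrite /gg /r0.
have a0 : 0 < 1 - alpha by rewrite subr_gt0.
have [a ea] : {a : R | 1 - alpha = a} by exists (1 - alpha).
rewrite ea in a0 *.
have D0 : 0 <= (a + 2 * b) ^+ 2 + 8 * a * (M - b).
  have -> : (a + 2 * b) ^+ 2 + 8 * a * (M - b) = (a - 2 * b) ^+ 2 + 8 * a * M by ring.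
  have h8 : 0 <= 8 * a * M by rewrite mulr_ge0 // ?mulr_ge0 // ltW.
  by rewrite addr_ge0 // sqr_ge0.
have s0 := sqrtr_ge0 ((a + 2 * b) ^+ 2 + 8 * a * (M - b)).
have s2 := sqr_sqrtr D0.
have [s es] : {s : R | Num.sqrt ((a + 2 * b) ^+ 2 + 8 * a * (M - b)) = s} by eexists.
rewrite es in s0 s2 *.
have {s0} s0 : 0 <= s := s0.
have {s2} s2 : s ^+ 2 = (a + 2 * b) ^+ 2 + 8 * a * (M - b) := s2.
have B0 : 0 < a + 2 * b + s  by lra.
have r0 : 0 < 2 * a / (a + 2 * b + s) by rewrite divr_gt0 //; lra.
have rBs : 2 * a / (a + 2 * b + s) * (a + 2 * b + s) = 2 * a by rewrite mulfVK // gt_eqF.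
have sgt : a - 2 * b < s.
  rewrite ltNge; apply/negP => H.
  have : s ^+ 2 <= (a - 2 * b) ^+ 2 by rewrite ler_sqr ?nnegrE //; lra.
  rewrite s2; nra.
have r1 : 2 * a / (a + 2 * b + s) < 1 by rewrite ltr_pdivrMr //; lra.
have [r er] : {r : R | 2 * a / (a + 2 * b + s) = r} by eexists.
rewrite er in r0 rBs r1 *.
split => //; split => //.
have fr : 2 * (M - b) * r ^+ 2 + (a + 2 * b) * r - a = 0.
  have e1 : r * s = 2 * a - r * (a + 2 * b) by lra.
  have e2 : (r * s) ^+ 2 = r ^+ 2 * ((a + 2 * b) ^+ 2 + 8 * a * (M - b)) by rewrite exprMn s2.
  rewrite e1 in e2.
  have : a * (2 * (M - b) * r ^+ 2 + (a + 2 * b) * r - a) = 0 by nra.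
  by move/eqP; rewrite mulf_eq0 gt_eqF //= => /eqP.
have r1' : 1 - r != 0 by rewrite subr_eq0 gt_eqF.
apply: (mulIf r1'); rewrite mulrDl -(mulrA (2 * M)) divfK //.
lra.
Qed.

Lemma gg_mono (R : realType) (b M alpha t : R) : 0 <= b -> 0 < M -> 0 <= alpha -> alpha < 1 -> 0 <= t -> t <= r0 b M alpha -> gg b M t <= 1 - alpha /\ (t < r0 b M alpha -> gg b M t < 1 - alpha).
Proof.
move=> hb hM ha0 ha1.
have [r0p [r01 gr]] := @r0_facts R b M alpha hb hM ha0 ha1.
rewrite -gr /gg => t0 tr.
have [r er] : {r : R | r0 b M alpha = r} by eexists.
rewrite er in r0p r01 tr *.
have t1 : t < 1 by lra.
have q : t ^+ 2 / (1 - t) <= r ^+ 2 / (1 - r).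
  rewrite ler_pdivrMr ?subr_gt0 // mulrAC ler_pdivlMr ?subr_gt0 //.
  have : t ^+ 2 <= r ^+ 2 by rewrite ler_sqr ?nnegrE //; lra.
  nra.
split.
  have h1 : 2 * b * t <= 2 * b * r by nra.
  have h2 : 2 * M * (t ^+ 2 / (1 - t)) <= 2 * M * (r ^+ 2 / (1 - r)) by rewrite ler_pM2l //; lra.
  lra.
move=> tr'.
have q' : t ^+ 2 / (1 - t) < r ^+ 2 / (1 - r).
  rewrite ltr_pdivrMr ?subr_gt0 // mulrAC ltr_pdivlMr ?subr_gt0 //.
  have : t ^+ 2 < r ^+ 2 by rewrite ltr_sqr ?nnegrE //; lra.
  nra.
have h1 : 2 * b * t <= 2 * b * r by nra.
have h2 : 2 * M * (t ^+ 2 / (1 - t)) < 2 * M * (r ^+ 2 / (1 - r)) by rewrite ltr_pM2l //; lra.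
lra.
Qed.
Definition nc {R : realType} (w : R[i]) : R := complex.Re `|w|.
Lemma normE (R : realType) (w : R[i]) : `|w| = (nc w)%:C.
Proof. by rewrite /nc RRe_real // normr_real. Qed.
Lemma ReN_le (R : realType) (w : R[i]) : - complex.Re w <= nc w.
Proof.
rewrite /nc normc_def /=.
have h1 : - complex.Re w <= `|complex.Re w| by rewrite -normrN ler_norm.
apply: (le_trans h1); rewrite -sqrtr_sqr; apply: ler_wsqrtr.
by rewrite lerDl sqr_ge0.
Qed.
Lemma nc_ge0 (R : realType) (w : R[i]) : 0 <= nc w.
Proof. by have := normr_ge0 w; rewrite normE ler0c. Qed.

Lemma geo_sum (F : comPzRingType) (x : F) n :
  (\sum_(2 <= k < n.+2) x ^+ k) * (1 - x) = x ^+ 2 - x ^+ n.+2.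
Proof.
elim: n => [|n IH]; first by rewrite big_geq // mul0r subrr.
rewrite big_nat_recr //= mulrDl IH mulrBr mulr1 -exprSr; ring.
Qed.

Lemma geo_le (R : realType) (t : R) n : 0 <= t -> t < 1 ->
  \sum_(2 <= k < n.+2) t ^+ k <= t ^+ 2 / (1 - t).
Proof.
move=> t0 t1; rewrite ler_pdivlMr ?subr_gt0 // geo_sum.
by rewrite lerBlDr lerDl exprn_ge0.
Qed.

Lemma pred2K n : (2 <= n)%N -> n.-2.+2 = n.
Proof. by case: n => [|[|]]. Qed.

Lemma bound (R : realType) (b M : R) (c : nat -> R[i]) (p : R[i] -> R[i]) (z : R[i]) :
  0 <= b -> 0 < M -> c 0%N = 1 -> `|c 1%N| = (2 * b)%:C ->
  (forall n : nat, (2 <= n)%N -> `|c n| <= (2 * M)%:C) ->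
  taylor_in_disk c p -> nc z < 1 -> nc (p z - 1) <= gg b M (nc z).
Proof.
move=> hb hM hc0 hc1 hcn hT zt1.
have t0 := nc_ge0 z.
have Hz := normE z.
move: t0 zt1 Hz; move: (nc z) => t t0 t1 Hz.
have zlt : `|z| < 1 by rewrite Hz ltcE /= eqxx t1.
have Hc := hT z zlt.
have key : forall n, `|\sum_(0 <= k < n.+2) c k * z ^+ k - 1| <= (gg b M t)%:C.
  move=> n.
  rewrite big_ltn // big_ltn // hc0 expr0 mulr1 [1 + _]addrC addrK.
  apply: (le_trans (ler_normD _ _)).
  have e1 : `|c 1%N * z ^+ 1| = (2 * b * t)%:C.
  by rewrite normrM expr1 hc1 Hz -rmorphM.
  have e2 : `|\sum_(2 <= k < n.+2) c k * z ^+ k| <= (2 * M * \sum_(2 <= k < n.+2) t ^+ k)%:C.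
    apply: (le_trans (ler_norm_sum _ _ _)).
    rewrite mulr_sumr rmorph_sum.
    apply: ler_sum_nat => k /andP [k2 _].
    apply: (@le_trans _ _ ((2 * M)%:C * (t ^+ k)%:C)); last by rewrite -rmorphM.
    rewrite normrM normrX Hz -rmorphXn.
    by rewrite ler_wpM2r ?hcn // ler0c exprn_ge0.
  rewrite e1.
  apply: (le_trans (lerD (lexx _) e2)).
  rewrite -rmorphD lecR /gg lerD2l ler_pM2l ?geo_le //.
  by rewrite mulr_gt0.
have Hu : forall e : R, 0 < e -> nc (p z - 1) < e + gg b M t.
  move=> e e0.
  near \oo => n.
  have n2 : (2 <= n)%N by near: n; exact: nbhs_infty_ge.
  have hn : `|p z - \sum_(0 <= k < n) c k * z ^+ k| < e%:C.
    near: n; move/cvgrPdist_lt : Hc; apply; rewrite ltcR //.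
  have en := @pred2K n n2.
  have := key n.-2; rewrite en => hk.
  rewrite -ltcR -normE.
  have -> : p z - 1 = (p z - \sum_(0 <= k < n) c k * z ^+ k) + (\sum_(0 <= k < n) c k * z ^+ k - 1).
    by rewrite addrA subrK.
  apply: (le_lt_trans (ler_normD _ _)).
  apply: (@lt_le_trans _ _ (e%:C + (gg b M t)%:C)); last by rewrite -rmorphD.
  exact: ltr_leD.
rewrite leNgt; apply/negP => H.
have := Hu (nc (p z - 1) - gg b M t); rewrite subr_gt0 => /(_ H).
by rewrite subrK ltxx.
Unshelve. all: by end_near.
Qed.

Lemma taylor_c0 (R : realType) (b M : R) : 0 < M -> taylor_in_disk (c0 b M) (p0 b M).
Proof.
move=> hM z zlt.
have t0 := nc_ge0 z.
have Hz := normE z.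
move: t0 zlt Hz; move: (nc z) => t t0 zlt Hz.
have t1 : t < 1 by move: zlt; rewrite Hz ltcE /= => /andP[].
have w0 : 1 - z != 0.
  rewrite subr_eq0; apply/negP => /eqP ez.
  by move: zlt; rewrite -ez normr1 ltxx.
have q0 : 0 < nc (1 - z).
  by have := w0; rewrite -normr_gt0 normE ltcE /= => /andP[].
have Hw := normE (1 - z).
move: q0 Hw; move: (nc (1 - z)) => q q0 Hw.
apply/cvgrPdist_lt => e e0.
have ee : e = (complex.Re e)%:C by rewrite RRe_real // gtr0_real.
have er0 : 0 < complex.Re e by move: e0; rewrite ee ltcR.
move: er0 ee; move: (complex.Re e) => er er0 ee.
rewrite ee.
have hexp : (GRing.exp t : R ^nat) @ \oo --> 0 by apply: cvg_expr; rewrite ger0_norm.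
have eps0 : 0 < er * q / (2 * M) by rewrite divr_gt0 ?mulr_gt0.
near=> n.
have n2 : (2 <= n)%N by near: n; exact: nbhs_infty_ge.
have hn : `|0 - t ^+ n| < er * q / (2 * M).
  by near: n; move/cvgrPdist_lt : hexp; apply.
rewrite sub0r normrN ger0_norm ?exprn_ge0 // in hn.
have en := @pred2K n n2.
have G : \sum_(2 <= k < n) z ^+ k = (z ^+ 2 - z ^+ n) / (1 - z).
  by rewrite -en -geo_sum mulfK.
have S : \sum_(0 <= k < n) c0 b M k * z ^+ k =
    1 - (2 * b)%:C * z - (2 * M)%:C * \sum_(2 <= k < n) z ^+ k.
  rewrite -{1}en big_ltn // big_ltn // en /c0 /= expr0 mulr1 expr1 addrA.
  rewrite mulr_sumr -sumrN.
  congr (_ + _); first by rewrite mulNr.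
  apply: eq_big_nat => k /andP [k2 _].
  by rewrite (gtn_eqF (ltnW k2)) (gtn_eqF k2) mulNr.
rewrite S G /p0.
have -> : 1 - (2 * b)%:C * z - (2 * M)%:C * (z ^+ 2 / (1 - z)) -
  (1 - (2 * b)%:C * z - (2 * M)%:C * ((z ^+ 2 - z ^+ n) / (1 - z))) =
  - ((2 * M)%:C * (z ^+ n / (1 - z))).
  by field.
rewrite normrN normrM normf_div normrX Hz Hw ger0_norm; last first.
  by rewrite ler0c mulr_ge0 // ltW.
rewrite -rmorphXn -fmorph_div -rmorphM ltcR.
rewrite ltr_pdivlMr ?mulr_gt0 // in hn.
rewrite mulrA ltr_pdivrMr //.
nra.
Unshelve. all: by end_near.
Qed.

Theorem theorem4p1 (R : realType) (b M alpha : R) (c : nat -> R[i])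
    (p : R[i] -> R[i]) :
  0 <= b -> 0 < M -> 0 <= alpha -> alpha < 1 ->
  c 0%N = 1 ->
  `|c 1%N| = (2 * b)%:C ->
  (forall n : nat, (2 <= n)%N -> `|c n| <= (2 * M)%:C) ->
  taylor_in_disk c p ->
  (forall z : R[i], `|z| <= (r0 b M alpha)%:C -> `|p z - 1| <= (1 - alpha)%:C) /\
  (forall z : R[i], `|z| < (r0 b M alpha)%:C -> alpha < complex.Re (p z)) /\
  (c0 b M 0%N = 1 /\
   `|c0 b M 1%N| = (2 * b)%:C /\
   (forall n : nat, (2 <= n)%N -> `|c0 b M n| <= (2 * M)%:C) /\
   taylor_in_disk (c0 b M) (p0 b M) /\
   p0 b M (r0 b M alpha)%:C = alpha%:C /\
   `|p0 b M (r0 b M alpha)%:C - 1| = (1 - alpha)%:C).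
Proof.
move=> hb hM ha0 ha1 hc0 hc1 hcn hT.
have [r0p [r01 gr]] := r0_facts hb hM ha0 ha1.
have P0' : forall r : R, gg b M r = 1 - alpha -> p0 b M r%:C = alpha%:C.
  move=> r gr'.
  have E : 1 - 2 * b * r - 2 * M * (r ^+ 2 / (1 - r)) = alpha.
    by move: gr'; rewrite /gg; lra.
  rewrite -E /p0.
  by rewrite !(rmorphB, rmorphM, rmorph1, fmorphV, rmorphXn).
have P0 := P0' _ gr.
split.
  move=> z hz.
  have Hz := normE z.
  rewrite Hz lecR in hz.
  have t0 := nc_ge0 z.
  have t1 : nc z < 1 by lra.
  have B := bound hb hM hc0 hc1 hcn hT t1.
  have [G _] := gg_mono hb hM ha0 ha1 t0 hz.
  by rewrite normE lecR; lra.
split.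
  move=> z hz.
  have Hz := normE z.
  rewrite Hz ltcR in hz.
  have t0 := nc_ge0 z.
  have t1 : nc z < 1 by lra.
  have B := bound hb hM hc0 hc1 hcn hT t1.
  have [_ G] := gg_mono hb hM ha0 ha1 t0 (ltW hz).
  have G' := G hz.
  have H := ReN_le (p z - 1).
  move: B H; move: (p z) => w.
  case: w => x y /= B H.
  lra.
split; first by rewrite /c0.
split.
  by rewrite /c0 /= normrN ger0_norm // ler0c mulr_ge0.
split.
  move=> [|[|n]] // _.
  by rewrite /c0 /= normrN ger0_norm // ler0c mulr_ge0 // ltW.
split; first exact: taylor_c0.
split; first exact: P0.
rewrite P0.
have -> : alpha%:C - 1 = - ((1 - alpha)%:C) by rewrite rmorphB rmorph1 opprB.
by rewrite normrN ger0_norm // ler0c subr_ge0 ltW.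
Qed.
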